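(* Let $A$ be a 2-sided residuated $\vee$-semilattice, let $F$ be a filter of $A$ and let $a\in A$ with $a\notin F$. Then there exists a $\vee$-prime filter $G$ of $A$ such that $F\subseteq G$ and $a\notin G$.
   Context: A residuated poset is a partially ordered semigroup $(A;\cdot,\le)$ with binary operations $\to,\leadsto$ such that $x\cdot y\le z$ iff $x\le y\to z$ iff $y\le x\leadsto z$ for all $x,y,z$. It is 2-sided if $x\cdot y\le x$ and $x\cdot y\le y$ for all $x,y$. It is a residuated $\vee$-semilattice if $(A,\le)$ is a join-semilattice. A filter of $A$ is a nonempty subset that is upward closed and closed under $\cdot$. A filter $G$ is $\vee$-prime if $x\vee y\in G$ implies $x\in G$ or $y\in G$. *)

(* Defs.v *)
Record ResJoinSemilattice := {
  carrier :> Type;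
  le : carrier -> carrier -> Prop;
  mul : carrier -> carrier -> carrier;
  rimp : carrier -> carrier -> carrier;
  limp : carrier -> carrier -> carrier;
  join : carrier -> carrier -> carrier;
  le_refl : forall x, le x x;
  le_antisym : forall x y, le x y -> le y x -> x = y;
  le_trans : forall x y z, le x y -> le y z -> le x z;
  mul_assoc : forall x y z, mul x (mul y z) = mul (mul x y) z;
  mul_mono : forall x y u v, le x y -> le u v -> le (mul x u) (mul y v);
  resid_r : forall x y z, le (mul x y) z <-> le x (rimp y z);
  resid_l : forall x y z, le (mul x y) z <-> le y (limp x z);
  join_ub_l : forall x y, le x (join x y);
  join_ub_r : forall x y, le y (join x y);
  join_lub : forall x y z, le x z -> le y z -> le (join x y) z
}.

Definition two_sided (A : ResJoinSemilattice) : Prop :=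
  forall x y : A, le A (mul A x y) x /\ le A (mul A x y) y.

Definition is_filter (A : ResJoinSemilattice) (F : A -> Prop) : Prop :=
  (exists x, F x) /\
  (forall x y, F x -> le A x y -> F y) /\
  (forall x y, F x -> F y -> F (mul A x y)).

Definition join_prime (A : ResJoinSemilattice) (G : A -> Prop) : Prop :=
  forall x y, G (join A x y) -> G x \/ G y.

(* Main.v *)
Require Import Defs.
From Stdlib Require Import Classical Lia FunctionalExtensionality PropExtensionality.
From mathcomp Require Import ssreflect ssrbool classical_sets.

Fixpoint pw (A : ResJoinSemilattice) (x : A) (n : nat) : A :=
  match n with 0 => x | S n => Defs.mul A x (pw A x n) end.

Lemma pw_mono (A : ResJoinSemilattice) (c d : A) n :
  Defs.le A c d -> Defs.le A (pw A c n) (pw A d n).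
Proof. intro H; induction n; simpl; [exact H| apply mul_mono; auto]. Qed.

Lemma pw_add (A : ResJoinSemilattice) (c : A) n m :
  pw A c (S (n + m)) = Defs.mul A (pw A c n) (pw A c m).
Proof.
  induction n; simpl; [reflexivity|].
  simpl in IHn. rewrite IHn. apply mul_assoc.
Qed.

Lemma pw_filter (A : ResJoinSemilattice) (G : A -> Prop) (c : A) n :
  is_filter A G -> G c -> G (pw A c n).
Proof.
  intros [_ [_ HM]] Hc; induction n; simpl; auto.
Qed.

Lemma pw_key (A : ResJoinSemilattice) (HA : two_sided A) (u v : A) :
  forall k m n z, m + n = k -> Defs.le A (pw A u m) z -> Defs.le A (pw A v n) z ->
  Defs.le A (pw A (Defs.join A u v) k) z.
Proof.
  induction k; intros m n z Hk Hu Hv.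
  - assert (m = 0) by lia; assert (n = 0) by lia; subst; simpl in *.
    apply join_lub; auto.
  - simpl. apply resid_r. apply join_lub; apply resid_r; apply resid_l.
    + destruct m as [|m].
      * apply resid_l. eapply le_trans; [apply (proj1 (HA u _))|exact Hu].
      * apply (IHk m n); [lia| |].
        -- apply resid_l. exact Hu.
        -- eapply le_trans; [exact Hv|]. apply resid_l. apply (proj2 (HA u z)).
    + destruct n as [|n].
      * apply resid_l. eapply le_trans; [apply (proj1 (HA v _))|exact Hv].
      * apply (IHk m n); [lia| |].
        -- eapply le_trans; [exact Hu|]. apply resid_l. apply (proj2 (HA v z)).
        -- apply resid_l. exact Hv.
Qed.

Definition ext (A : ResJoinSemilattice) (G : A -> Prop) (x : A) (y : A) : Prop :=
  exists h n, G h /\ Defs.le A (pw A (Defs.mul A h x) n) y.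

Lemma ext_filter (A : ResJoinSemilattice) (HA : two_sided A) G x :
  is_filter A G -> is_filter A (ext A G x) /\ (forall y, G y -> ext A G x y)
  /\ ext A G x x.
Proof.
  intros HG; pose proof HG as [[h0 Hh0] [HU HM]].
  assert (Hx : ext A G x x) by (exists h0, 0; split; auto; apply (proj2 (HA h0 x))).
  split; [|split; auto].
  - split; [eauto|split].
    + intros y1 y2 [h [n [Hh Hle]]] H12. exists h, n; split; auto.
      eapply le_trans; eauto.
    + intros y1 y2 [h1 [n1 [H1 L1]]] [h2 [n2 [H2 L2]]].
      exists (Defs.mul A h1 h2), (S (n1 + n2)); split; auto.
      rewrite pw_add. apply mul_mono.
      * eapply le_trans; [|exact L1]. apply pw_mono. apply mul_mono;
        [apply (proj1 (HA h1 h2))|apply le_refl].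
      * eapply le_trans; [|exact L2]. apply pw_mono. apply mul_mono;
        [apply (proj2 (HA h1 h2))|apply le_refl].
  - intros y Hy. exists y, 0; split; auto. apply (proj1 (HA y x)).
Qed.

Lemma maximal_prime (A : ResJoinSemilattice) (HA : two_sided A) G a :
  is_filter A G -> ~ G a ->
  (forall H, is_filter A H -> (forall y, G y -> H y) -> ~ H a -> forall y, H y -> G y) ->
  join_prime A G.
Proof.
  intros HG Ha Hmax x y Hs.
  destruct (classic (G x)) as [|Hx]; [auto|].
  destruct (classic (G y)) as [|Hy]; [auto|].
  exfalso.
  assert (E : forall z, ~ G z -> ext A G z a).
  { intros z Hz. apply NNPP; intro Hn.
    destruct (ext_filter A HA G z HG) as [F1 [F2 F3]].
    apply Hz. exact (Hmax _ F1 F2 Hn z F3). }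
  destruct (E x Hx) as [h1 [n1 [H1 L1]]].
  destruct (E y Hy) as [h2 [n2 [H2 L2]]].
  pose proof HG as [_ [HU HM]].
  set k := Defs.mul A h1 h2.
  assert (Hk : G k) by (apply HM; auto).
  assert (B : Defs.le A (pw A (Defs.join A (Defs.mul A k x) (Defs.mul A k y)) (n1 + n2)) a).
  { apply (pw_key A HA _ _ _ n1 n2); auto.
    - eapply le_trans; [|exact L1]. apply pw_mono. apply mul_mono;
        [apply (proj1 (HA h1 h2))|apply le_refl].
    - eapply le_trans; [|exact L2]. apply pw_mono. apply mul_mono;
        [apply (proj2 (HA h1 h2))|apply le_refl]. }
  apply Ha. apply (HU _ _ (pw_filter A G (Defs.mul A k (Defs.join A x y)) (n1 + n2) HG
                             (HM _ _ Hk Hs))).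
  eapply le_trans; [|exact B]. apply pw_mono.
  apply resid_l. apply join_lub; apply resid_l; [apply join_ub_l|apply join_ub_r].
Qed.

Theorem theorem5p5 (A : ResJoinSemilattice) (HA : two_sided A)
  (F : A -> Prop) (a : A) (HF : is_filter A F) (Ha : ~ F a) :
  exists G : A -> Prop,
    is_filter A G /\ join_prime A G /\ (forall x, F x -> G x) /\ ~ G a.
Proof.
  pose P := fun X : set A => is_filter A (fun y => F y \/ X y) /\ ~ (F a \/ X a).
  destruct (@Zorn_bigcup A P) as [M [[HM1 HM2] HM3]].
  - intros C HC Htot. split.
    + pose proof HF as [[f0 Hf0] [HFU HFM]]. split; [exists f0; auto|split].
      * intros x y [Hx|[X CX Xx]] Hxy.
        -- left; eauto.
        -- destruct (HC X CX) as [[_ [HU _]] _].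
           destruct (HU x y (or_intror Xx) Hxy) as [|Hy]; [left; auto|right; exists X; auto].
      * assert (Lift : forall X x y, C X -> (F x \/ X x) -> (F y \/ X y) ->
                  F (Defs.mul A x y) \/ (bigcup C (fun X => X)) (Defs.mul A x y)).
        { intros X x y CX Hx Hy. destruct (HC X CX) as [[_ [_ HM]] _].
          destruct (HM x y Hx Hy) as [|Hz]; [left; auto|right; exists X; auto]. }
        intros x y [Hx|[X1 C1 X1x]] [Hy|[X2 C2 X2y]].
        -- left; auto.
        -- apply (Lift X2); auto.
        -- apply (Lift X1); auto.
        -- destruct (Htot X1 X2 C1 C2) as [S|S].
           ++ exact (Lift X2 x y C2 (or_intror (S x X1x)) (or_intror X2y)).
           ++ exact (Lift X1 x y C1 (or_intror X1x) (or_intror (S y X2y))).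
    + intros [Hfa|[X CX Xa]]; [auto|]. destruct (HC X CX) as [_ Hn]. auto.
  - exists (fun y => F y \/ M y). split; [exact HM1|]. split; [|split; auto].
    apply (maximal_prime A HA _ a HM1 HM2).
    intros H HH HGH HHa y Hy. apply NNPP; intro Hny.
    apply (HM3 H).
    + split.
      * intros z Mz. apply HGH; auto.
      * intro S. apply Hny. right. apply S. exact Hy.
    + split.
      * assert (E : (fun y => F y \/ H y) = H).
        { apply functional_extensionality; intro z.
          apply propositional_extensionality; split; [intros [|]|]; auto. }
        rewrite E. exact HH.
      * intros [|]; auto.
Qed.
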